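(* Let $n\ge 1$ and $m\ge 2$ both be odd. Then $L_m(n)=0$.
   Context: The Ducci function $D:\mathbb{Z}_m^n\to\mathbb{Z}_m^n$ is $D(x_1,\dots,x_n)=(x_1+x_2,\,x_2+x_3,\,\dots,\,x_{n-1}+x_n,\,x_n+x_1)$, entries mod $m$. For $\mathbf{u}\in\mathbb{Z}_m^n$, $\mathrm{Len}(\mathbf{u})$ is the smallest $l\ge 0$ such that $D^{l+k}(\mathbf{u})=D^l(\mathbf{u})$ for some $k\ge 1$. $L_m(n)=\mathrm{Len}(0,0,\dots,0,1)$. *)

(* Defs.v *)
From mathcomp Require Import all_boot all_algebra.
From Stdlib Require Import ClassicalEpsilon.
Set Implicit Arguments. Unset Strict Implicit. Unset Printing Implicit Defensive.
Import GRing.Theory.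

(* Vectors in Z_m^n, as finite functions 'I_n -> 'Z_m (meaningful for m >= 2;
   index i : 'I_n stands for x_{i+1}). *)
Definition vec (m n : nat) := {ffun 'I_n -> 'Z_m}.

Definition ducci (m n : nat) (x : vec m n) : vec m n :=
  [ffun i => (x i + x (ordS i))%R].

Definition eventually_periodic_from (m n : nat) (u : vec m n) (l : nat) : Prop :=
  exists k, 0 < k /\ iter (l + k) (@ducci m n) u = iter l (@ducci m n) u.

Definition epfb (m n : nat) (u : vec m n) (l : nat) : bool :=
  if excluded_middle_informative (eventually_periodic_from u l) then true else false.

Lemma epfbP m n (u : vec m n) l : reflect (eventually_periodic_from u l) (epfb u l).
Proof.
rewrite /epfb; case: excluded_middle_informative => H; [by left | by right].
Qed.

Lemma Len_exists (m n : nat) (u : vec m n) : exists l, epfb u l.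
Proof.
pose f := fun i : 'I_(#|vec m n|).+1 => iter i (@ducci m n) u.
have : ~~ injectiveb f.
  apply/injectiveP => inj.
  have H := @leq_card _ _ f inj.
  rewrite card_ord in H.
  exact: (elimF idP (ltnn #|vec m n|) H).
case/dinjectivePn => i _ [j]; rewrite !inE => /andP [ji _] eqf.
have [lt|ge] := ltnP i j.
- exists i; apply/epfbP; exists (j - i); split; first by rewrite subn_gt0; assumption.
  rewrite (subnKC (ltnW lt)); symmetry; exact: eqf.
- have gt' : j < i by rewrite ltn_neqAle ji ge.
  exists j; apply/epfbP; exists (i - j); split; first by rewrite subn_gt0; assumption.
  rewrite (subnKC (ltnW gt')); exact: eqf.
Qed.

Definition Len (m n : nat) (u : vec m n) : nat := ex_minn (Len_exists u).

Definition e_last (m n : nat) : vec m n :=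
  [ffun i : 'I_n => if val i == n.-1 then 1%R else 0%R].

Definition L (m n : nat) : nat := Len (e_last m n).

(* Main.v *)
Require Import Defs.
From mathcomp Require Import all_boot all_algebra.
Import GRing.Theory.

Lemma ducci_inj (m n : nat) : 1 <= n -> odd n -> 2 <= m -> odd m ->
  injective (@ducci m n).
Proof.
case: n => [//|n'] _ on m2 om x y /ffunP E.
pose d i := (x i - y i)%R.
have H i : (d i + d (ordS i) = 0)%R.
  have := E i; rewrite !ffunE /d => h.
  by rewrite addrACA -opprD h subrr.
have K k : k < n'.+1 -> d (inord k) = ((-1) ^+ k * d ord0)%R.
  elim: k => [_|k IH lt]; first by rewrite expr0 mul1r; congr d; apply: val_inj; rewrite /= inordK.
  have e : ordS (inord k : 'I_n'.+1) = inord k.+1.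
    apply: val_inj; rewrite /= !inordK ?modn_small //; exact: ltnW.
  have := H (inord k); rewrite e IH ?(ltnW lt) // => /eqP.
  by rewrite addrC addr_eq0 => /eqP ->; rewrite exprS mulN1r mulNr.
have d0 : d ord0 = 0%R.
  have e : ordS (inord n' : 'I_n'.+1) = ord0.
    by apply: val_inj; rewrite /= inordK // modnn.
  have := H (inord n'); rewrite e K // -signr_odd.
  move: on => /= on; rewrite (negbTE on) expr0 mul1r => h.
  have u : (((2%:R)%R : 'Z_m) \is a GRing.unit).
    rewrite unitZpE //; rewrite /coprime gcdnC -{1}(odd_double_half m) om.
    by rewrite -addn1 addnC -muln2 gcdnMDl gcdn1.
  apply: (mulIr u); rewrite mul0r mulr_natr mulr2n; exact: h.
apply/ffunP => i.
have : d i = 0%R.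
  have -> : i = inord i by apply: val_inj; rewrite /= inordK.
  by rewrite K // d0 mulr0.
by move/eqP; rewrite /d subr_eq0 => /eqP.
Qed.

Theorem theorem2p2 (m n : nat) :
  1 <= n -> odd n -> 2 <= m -> odd m -> L m n = 0.
Proof.
move=> n1 on m2 om.
have inj := @ducci_inj m n n1 on m2 om.
set u := e_last m n.
have P0 : epfb u 0.
  pose f := fun i : 'I_(#|vec m n|).+1 => iter i (@ducci m n) u.
  have : ~~ injectiveb f.
    apply/injectiveP => inj'.
    have H := @leq_card _ _ f inj'.
    rewrite card_ord in H.
    exact: (elimF idP (ltnn #|vec m n|) H).
  case/dinjectivePn => i _ [j]; rewrite !inE => /andP [ji _] eqf.
  have canc : forall a b c, iter (a + b) (@ducci m n) u = iter (a + c) (@ducci m n) u ->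
       iter b (@ducci m n) u = iter c (@ducci m n) u.
    elim=> [//|a IH] b c; rewrite !addSn /= => /inj; exact: IH.
  apply/epfbP.
  have [lt|ge] := ltnP i j.
  - exists (j - i); split; first by rewrite subn_gt0.
    apply: (canc i); rewrite add0n addn0 (subnKC (ltnW lt)); symmetry; exact: eqf.
  - have gt' : j < i by rewrite ltn_neqAle ji ge.
    exists (i - j); split; first by rewrite subn_gt0.
    apply: (canc j); rewrite add0n addn0 (subnKC (ltnW gt')); exact: eqf.
rewrite /L /Len; case: ex_minnP => l _ /(_ 0 P0).
by rewrite leqn0 => /eqP.
Qed.
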